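(* Let $f=(f_0,f_1)\in F\times F$ be such that $P_1^f\ll P_0^f$, and let $T$ be an anonymous comparison test that is error-free. Then $P_0^f(\{T(\cdot,f)=\tfrac12\})>0$.
   Context: Let $\Omega=\{0,1\}$ and let $\Omega^\infty$ be the set of infinite sequences $\omega=(\omega_1,\omega_2,\dots)$ with $\omega_t\in\Omega$; $\omega^t=(\omega_1,\dots,\omega_t)$ denotes the prefix of length $t$ and also the cylinder set $\{\hat\omega\in\Omega^\infty:\hat\omega^t=\omega^t\}$. $\Omega^\infty$ carries the $\sigma$-algebra generated by all cylinders. $\Delta(\Omega)$ is the set of probability distributions on $\Omega$. A forecasting strategy is a function $f:\bigcup_{t\ge 0}(\Omega\times\Delta(\Omega)\times\Delta(\Omega))^t\to\Delta(\Omega)$; $F$ denotes the set of all forecasting strategies. For a pair $f=(f_0,f_1)\in F\times F$ and $\omega\in\Omega^\infty$, the play path $h=h(\omega,f_0,f_1)$ is defined recursively by $h^0=\emptyset$ and $h^t=(h^{t-1},(\omega_t,f_0(h^{t-1}),f_1(h^{t-1})))$. The pair $f$ induces probability measures $P_0^f,P_1^f$ on $\Omega^\infty$ determined by $P_i^f(\omega^t)=\prod_{n=1}^t f_i(h^{n-1}(\omega,f_0,f_1))[\omega_n]$. A comparison test is a function $T:\Omega^\infty\times F\times F\to\{0,\tfrac12,1\}$, measurable in $\omega$ for each fixed pair. Write $\{T(\cdot,f)=k\}=\{\omega: T(\omega,f_0,f_1)=k\}$. $T$ is anonymous if $T(\omega,f_0,f_1)=1-T(\omega,f_1,f_0)$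 for all $\omega,f_0,f_1$. $T$ is error-free if for all $f\in F\times F$ and $i\in\{0,1\}$, $P_{1-i}^f(\{T(\cdot,f)=i\})=0$. *)

(* Defs.v *)
From Stdlib Require Import Reals List.
Import ListNotations.
Open Scope R_scope.

(* Omega = {0,1} is encoded as bool (false = 0, true = 1). *)
Definition Dist : Type :=
  { d : bool -> R | (forall b, 0 <= d b) /\ d false + d true = 1 }.
Definition dprob (d : Dist) (b : bool) : R := proj1_sig d b.

(* Infinite sequences; omega_t (t >= 1) is  w (t-1). *)
Definition Seq : Type := nat -> bool.

(* Histories: finite sequences of triples (omega_t, forecast_0, forecast_1),
   oldest first. *)
Definition History : Type := list (bool * Dist * Dist).

Definition Strategy : Type := History -> Dist.

Fixpoint hist (f0 f1 : Strategy) (w : Seq) (t : nat) : History :=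
  match t with
  | O => []
  | S n => hist f0 f1 w n ++ [(w n, f0 (hist f0 f1 w n), f1 (hist f0 f1 w n))]
  end.

Definition pick (f0 f1 : Strategy) (i : bool) : Strategy :=
  if i then f1 else f0.

Fixpoint cyl_prob (f0 f1 : Strategy) (i : bool) (w : Seq) (t : nat) : R :=
  match t with
  | O => 1
  | S n => cyl_prob f0 f1 i w n * dprob (pick f0 f1 i (hist f0 f1 w n)) (w n)
  end.

Definition cyl (w : Seq) (t : nat) : Seq -> Prop :=
  fun w' => forall n, (n < t)%nat -> w' n = w n.

Inductive measurable : (Seq -> Prop) -> Prop :=
| meas_cyl : forall w t, measurable (cyl w t)
| meas_compl : forall A, measurable A -> measurable (fun x => ~ A x)
| meas_union : forall A : nat -> Seq -> Prop,
    (forall n, measurable (A n)) -> measurable (fun x => exists n, A n x)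
| meas_ext : forall A B, measurable A -> (forall x, A x <-> B x) -> measurable B.

Definition is_prob_measure (mu : (Seq -> Prop) -> R) : Prop :=
  (forall A, measurable A -> 0 <= mu A) /\
  mu (fun _ => True) = 1 /\
  (forall A : nat -> Seq -> Prop,
      (forall n, measurable (A n)) ->
      (forall m n x, m <> n -> A m x -> A n x -> False) ->
      infinite_sum (fun n => mu (A n)) (mu (fun x => exists n, A n x))).

(* mu is the measure P_i^f: a probability measure with the prescribed
   cylinder values (unique by Caratheodory/Dynkin). *)
Definition is_Pf (mu : (Seq -> Prop) -> R) (f0 f1 : Strategy) (i : bool) : Prop :=
  is_prob_measure mu /\ forall w t, mu (cyl w t) = cyl_prob f0 f1 i w t.

Definition abs_cont (nu mu : (Seq -> Prop) -> R) : Prop :=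
  forall A, measurable A -> mu A = 0 -> nu A = 0.

Definition is_comparison_test (T : Seq -> Strategy -> Strategy -> R) : Prop :=
  (forall w f0 f1, T w f0 f1 = 0 \/ T w f0 f1 = 1/2 \/ T w f0 f1 = 1) /\
  (forall f0 f1 k, measurable (fun w => T w f0 f1 = k)).

Definition anonymous (T : Seq -> Strategy -> Strategy -> R) : Prop :=
  forall w f0 f1, T w f0 f1 = 1 - T w f1 f0.

Definition error_free (T : Seq -> Strategy -> Strategy -> R)
  (P : Strategy -> Strategy -> bool -> (Seq -> Prop) -> R) : Prop :=
  forall f0 f1,
    P f0 f1 true (fun w => T w f0 f1 = 0) = 0 /\
    P f0 f1 false (fun w => T w f0 f1 = 1) = 0.

(* Main.v *)
Require Import Defs.
From Stdlib Require Import Reals List Lra Lia FunctionalExtensionality PropExtensionality Classical.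
Open Scope R_scope.

Lemma mu_ext (mu : (Seq -> Prop) -> R) A B :
  (forall x, A x <-> B x) -> mu A = mu B.
Proof.
  intros H. f_equal. apply functional_extensionality; intro x.
  apply propositional_extensionality; auto.
Qed.

Lemma mu_empty mu : is_prob_measure mu -> mu (fun _ => False) = 0.
Proof.
  intros [H0 [H1 H2]].
  set (e := mu (fun _ => False)).
  assert (Hm : measurable (fun _ : Seq => False)).
  { apply (meas_ext (fun x => ~ (fun _ : Seq => True) x)).
    - apply meas_compl. apply (meas_ext (cyl (fun _ => true) 0)).
      + apply meas_cyl.
      + intros x; split; auto. intros _ n Hn; lia.
    - intros x; simpl; tauto. }
  assert (Hs := H2 (fun _ => fun _ => False) (fun _ => Hm) (fun m n x _ h _ => h)).
  cbv beta in Hs.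
  rewrite (mu_ext mu (fun x => exists n : nat, False) (fun _ => False)) in Hs
    by (intros x; split; [intros [_ h]; exact h| tauto]).
  fold e in Hs.
  destruct (Req_dec e 0) as [|Hne]; auto.
  assert (Hpos : Rabs e / 2 > 0) by (pose proof (Rabs_pos_lt e Hne); lra).
  destruct (Hs _ Hpos) as [N HN].
  pose proof (HN (S N) (le_S _ _ (le_n N))) as A.
  pose proof (HN (S (S N)) (le_S _ _ (le_S _ _ (le_n N)))) as B.
  unfold Rdist in A, B. rewrite sum_cte in A, B.
  rewrite !S_INR in A, B.
  assert (e = (e * (INR N + 1 + 1 + 1) - e) - (e * (INR N + 1 + 1) - e)) by ring.
  pose proof (Rabs_triang (e * (INR N + 1 + 1 + 1) - e) (- (e * (INR N + 1 + 1) - e))).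
  rewrite Rabs_Ropp in H3.
  replace (e * (INR N + 1 + 1 + 1) - e + - (e * (INR N + 1 + 1) - e)) with e in H3 by ring. rewrite S_INR in B. lra.
Qed.

Lemma mu_add mu A B : is_prob_measure mu -> measurable A -> measurable B ->
  (forall x, A x -> B x -> False) ->
  mu (fun x => A x \/ B x) = mu A + mu B.
Proof.
  intros Hp HA HB Hd. pose proof (mu_empty mu Hp) as He.
  destruct Hp as [H0 [H1 H2]].
  assert (Hm : measurable (fun _ : Seq => False)).
  { apply (meas_ext (fun x => ~ (fun _ : Seq => True) x)).
    - apply meas_compl. apply (meas_ext (cyl (fun _ => true) 0)).
      + apply meas_cyl.
      + intros x; split; auto. intros _ n Hn; lia.
    - intros x; simpl; tauto. }
  set (S := fun n : nat => match n with 0%nat => A | 1%nat => B | _ => fun _ => False end).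
  assert (HS : forall n, measurable (S n)) by (intros [|[|n]]; simpl; auto).
  assert (HD : forall m n x, m <> n -> S m x -> S n x -> False).
  { intros [|[|m]] [|[|n]] x Hmn; simpl; try tauto; try (intros; eapply Hd; eauto).
    all: intros a b; exfalso; apply Hmn; reflexivity. }
  pose proof (H2 S HS HD) as Hs.
  rewrite (mu_ext mu (fun x => exists n, S n x) (fun x => A x \/ B x)) in Hs.
  2:{ intros x; split.
      - intros [[|[|n]] h]; simpl in h; tauto.
      - intros [h|h]; [exists 0%nat|exists 1%nat]; exact h. }
  apply (uniqueness_sum (fun n => mu (S n))); auto.
  intros eps Heps. exists 1%nat. intros n Hn.
  assert (sum_f_R0 (fun n => mu (S n)) n = mu A + mu B).
  { induction n. lia. destruct n. simpl. ring.
    simpl sum_f_R0 in *. rewrite IHn by lia. simpl. rewrite He. ring. }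
  rewrite H. unfold Rdist. rewrite Rminus_diag, Rabs_R0. exact Heps.
Qed.

Theorem mainTheorem2
  (P : Strategy -> Strategy -> bool -> (Seq -> Prop) -> R)
  (HP : forall g0 g1 i, is_Pf (P g0 g1 i) g0 g1 i)
  (f0 f1 : Strategy)
  (Hac : abs_cont (P f0 f1 true) (P f0 f1 false))
  (T : Seq -> Strategy -> Strategy -> R)
  (HT : is_comparison_test T)
  (Hanon : anonymous T)
  (Herr : error_free T P) :
  P f0 f1 false (fun w => T w f0 f1 = 1/2) > 0.
Proof.
  destruct HT as [Hv Hmeas].
  destruct (Herr f0 f1) as [E1 E0].
  destruct (HP f0 f1 false) as [Hp0 _].
  destruct (HP f0 f1 true) as [Hp1 _].
  pose proof (proj1 Hp0 _ (Hmeas f0 f1 (1/2))) as Hge.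
  destruct (Rle_or_lt (P f0 f1 false (fun w => T w f0 f1 = 1/2)) 0) as [Hle|]; [|lra].
  exfalso.
  assert (Hh : P f0 f1 false (fun w => T w f0 f1 = 1/2) = 0) by lra.
  assert (HC : P f0 f1 false (fun w => ~ T w f0 f1 = 0) = 0).
  { rewrite (mu_ext _ _ (fun w => T w f0 f1 = 1 \/ T w f0 f1 = 1/2)).
    - rewrite mu_add; auto. lra. intros x a b; rewrite a in b; lra.
    - intros x; destruct (Hv x f0 f1) as [h|[h|h]]; rewrite h; split; intros; lra. }
  apply Hac in HC; [|apply meas_compl, Hmeas].
  pose proof (proj1 (proj2 Hp1)) as Ht.
  rewrite (mu_ext _ _ (fun w => T w f0 f1 = 0 \/ ~ T w f0 f1 = 0)) in Ht
    by (intros x; split; auto; intros _; apply classic).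
  rewrite mu_add in Ht; auto; try lra; try apply meas_compl, Hmeas; tauto.
Qed.
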